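(* Let $\mathrm{S}$ be an associative semicopula (i.e. $\mathrm{S}(\mathrm{S}(x,y),z)=\mathrm{S}(x,\mathrm{S}(y,z))$ for all $x,y,z\in[0,1]$) such that for every $a\in(0,1)$ the function $x\mapsto\mathrm{S}(a,x)$ on $[0,1]$ is strictly increasing and left-continuous, and its discontinuity points are isolated in the sense that for every discontinuity point $z$ of $x\mapsto\mathrm{S}(a,x)$ there is $\varepsilon>0$ such that $x\mapsto\mathrm{S}(a,x)$ is continuous on $(z,z+\varepsilon)$. Then for every measurable space $(X,\mathcal{A})$, every capacity $\mu$ on $\mathcal{A}$ that is continuous from below, every $\mathcal{A}$-measurable $f\colon X\to[0,1]$ and every $a\in[0,1]$, $$\mathbf{I}_{\mathrm{S}}\big(\mu,\mathrm{S}(a,f)\big)=\mathrm{S}\big(a,\mathbf{I}_{\mathrm{S}}(\mu,f)\big),$$ where $\mathrm{S}(a,f)$ denotes the function $x\mapsto\mathrm{S}(a,f(x))$.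
   Context: A semicopula is a function $\mathrm{S}\colon[0,1]^2\to[0,1]$ that is non-decreasing in each coordinate and has neutral element $1$, i.e. $\mathrm{S}(x,1)=\mathrm{S}(1,x)=x$ for all $x\in[0,1]$. For a measurable space $(X,\mathcal{A})$ (with $X$ nonempty and $\mathcal{A}$ a $\sigma$-algebra), a capacity on $\mathcal{A}$ is a non-decreasing set function $\mu\colon\mathcal{A}\to[0,1]$ with $\mu(\emptyset)=0$ and $\mu(X)=1$; it is continuous from below if $\lim_{n\to\infty}\mu(A_n)=\mu\big(\bigcup_{k\ge1}A_k\big)$ whenever $A_1\subseteq A_2\subseteq\cdots$ are in $\mathcal{A}$. For a capacity $\mu$ and an $\mathcal{A}$-measurable $f\colon X\to[0,1]$, the generalized Sugeno integral is $$\mathbf{I}_{\mathrm{S}}(\mu,f)=\sup_{t\in[0,1]}\mathrm{S}\big(t,\mu(\{x\in X: f(x)\ge t\})\big).$$ *)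

(* Defs.v *)
From Stdlib Require Import Reals Classical ClassicalEpsilon.
Open Scope R_scope.

Definition in01 (x : R) : Prop := 0 <= x <= 1.

(* Supremum of a set of reals (chosen least upper bound; 0 if none exists). *)
Definition Rsup (E : R -> Prop) : R :=
  epsilon (inhabits 0) (fun v => is_lub E v).

Definition semicopula (S : R -> R -> R) : Prop :=
  (forall x y, in01 x -> in01 y -> in01 (S x y)) /\
  (forall x1 x2 y, in01 x1 -> in01 x2 -> in01 y -> x1 <= x2 -> S x1 y <= S x2 y) /\
  (forall x y1 y2, in01 x -> in01 y1 -> in01 y2 -> y1 <= y2 -> S x y1 <= S x y2) /\
  (forall x, in01 x -> S x 1 = x /\ S 1 x = x).

Definition associative01 (S : R -> R -> R) : Prop :=
  forall x y z, in01 x -> in01 y -> in01 z -> S (S x y) z = S x (S y z).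

Definition strictly_increasing01 (g : R -> R) : Prop :=
  forall x y, in01 x -> in01 y -> x < y -> g x < g y.

Definition continuous_at01 (g : R -> R) (x : R) : Prop :=
  forall eps, 0 < eps -> exists delta, 0 < delta /\
    forall y, in01 y -> Rabs (y - x) < delta -> Rabs (g y - g x) < eps.

Definition left_continuous01 (g : R -> R) : Prop :=
  forall x, in01 x -> forall eps, 0 < eps -> exists delta, 0 < delta /\
    forall y, in01 y -> y <= x -> x - y < delta -> Rabs (g y - g x) < eps.

Definition isolated_discontinuities01 (g : R -> R) : Prop :=
  forall z, in01 z -> ~ continuous_at01 g z ->
    exists eps, 0 < eps /\
      forall x, in01 x -> z < x < z + eps -> continuous_at01 g x.

Definition sigma_algebra {X : Type} (A : (X -> Prop) -> Prop) : Prop :=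
  A (fun _ => False) /\
  (forall B, A B -> A (fun x => ~ B x)) /\
  (forall Bn : nat -> X -> Prop, (forall n, A (Bn n)) -> A (fun x => exists n, Bn n x)).

Definition borel (B : R -> Prop) : Prop :=
  forall Sigma : (R -> Prop) -> Prop, sigma_algebra Sigma ->
    (forall t, Sigma (fun x => t <= x)) -> Sigma B.

Definition measurable_fun {X : Type} (A : (X -> Prop) -> Prop) (f : X -> R) : Prop :=
  forall B, borel B -> A (fun x => B (f x)).

Definition capacity {X : Type} (A : (X -> Prop) -> Prop) (mu : (X -> Prop) -> R) : Prop :=
  (forall B, A B -> in01 (mu B)) /\
  mu (fun _ => False) = 0 /\
  mu (fun _ => True) = 1 /\
  (forall B C, A B -> A C -> (forall x, B x -> C x) -> mu B <= mu C).

Definition continuous_from_below {X : Type} (A : (X -> Prop) -> Prop)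
  (mu : (X -> Prop) -> R) : Prop :=
  forall Bn : nat -> X -> Prop,
    (forall n, A (Bn n)) -> (forall n x, Bn n x -> Bn (S n) x) ->
    Un_cv (fun n => mu (Bn n)) (mu (fun x => exists n, Bn n x)).

Definition sugeno {X : Type} (S : R -> R -> R) (mu : (X -> Prop) -> R) (f : X -> R) : R :=
  Rsup (fun v => exists t, in01 t /\ v = S t (mu (fun x => t <= f x))).

(* Main.v *)
Require Import Defs.
From Stdlib Require Import Reals Lra Classical ClassicalEpsilon FunctionalExtensionality PropExtensionality.
Open Scope R_scope.

Lemma Rsup_spec (E : R -> Prop) :
  (exists x, E x) -> (forall x, E x -> x <= 1) -> is_lub E (Rsup E).
Proof.
  intros Hne Hb. unfold Rsup. apply epsilon_spec.
  destruct (completeness E) as [m Hm]; [exists 1; exact Hb|exact Hne|].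
  exists m; exact Hm.
Qed.

Lemma pred_ext {X : Type} (P Q : X -> Prop) : (forall x, P x <-> Q x) -> P = Q.
Proof.
  intros H. apply functional_extensionality; intros x.
  apply propositional_extensionality; auto.
Qed.

Lemma S0 S : semicopula S -> forall y, in01 y -> S 0 y = 0 /\ S y 0 = 0.
Proof.
  intros [H1 [H2 [H3 H4]]] y Hy.
  assert (h0 : in01 0) by (unfold in01; lra).
  assert (h1 : in01 1) by (unfold in01; lra).
  split.
  - pose proof (H3 0 y 1 h0 Hy h1 (proj2 Hy)).
    destruct (H4 0 h0) as [e _]. rewrite e in H.
    destruct (H1 0 y h0 Hy). lra.
  - pose proof (H2 y 1 0 Hy h1 h0 (proj2 Hy)).
    destruct (H4 0 h0) as [_ e]. rewrite e in H.
    destruct (H1 y 0 Hy h0). lra.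
Qed.

Lemma lc_all S : semicopula S ->
  (forall a, 0 < a < 1 ->
     strictly_increasing01 (S a) /\ left_continuous01 (S a) /\
     isolated_discontinuities01 (S a)) ->
  forall c, in01 c -> left_continuous01 (S c).
Proof.
  intros HS Hh c Hc.
  destruct (Req_dec c 0) as [->|n0].
  - intros x Hx eps He; exists 1; split; [lra|]; intros y Hy _ _.
    rewrite (proj1 (S0 S HS y Hy)), (proj1 (S0 S HS x Hx)).
    rewrite Rminus_0_r, Rabs_R0; lra.
  - destruct (Req_dec c 1) as [->|n1].
    + intros x Hx eps He; exists eps; split; [lra|]; intros y Hy Hyx Hd.
      destruct HS as [_ [_ [_ H4]]].
      rewrite (proj2 (H4 y Hy)), (proj2 (H4 x Hx)).
      unfold Rabs; destruct Rcase_abs; lra.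
    + unfold in01 in Hc. apply Hh; lra.
Qed.

Lemma z_lemma S a : semicopula S -> in01 a -> forall s,
  exists z, in01 z /\
   ((forall y, in01 y -> (s <= S a y <-> z <= y)) \/
    (forall y, in01 y -> (s <= S a y <-> z < y))).
Proof.
  intros HS Ha s.
  destruct HS as [H1 [H2 [H3 H4]]].
  set (L := fun y => in01 y /\ S a y < s).
  destruct (classic (exists y, L y)) as [Hne|Hemp].
  - assert (Hl : is_lub L (Rsup L)).
    { apply Rsup_spec; auto. intros x [Hx _]; apply Hx. }
    set (z := Rsup L) in *.
    destruct Hl as [Hub Hlst].
    assert (Hz : in01 z).
    { destruct Hne as [y0 Hy0]. pose proof (Hub y0 Hy0).
      destruct Hy0 as [[? ?] _]. split; [lra|].
      apply Hlst. intros x [Hx _]; apply Hx. }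
    exists z; split; auto.
    destruct (Rle_or_lt s (S a z)) as [Hs|Hs].
    + left. intros y Hy; split.
      * intros Hsy. destruct (Rle_or_lt z y) as [|Hyz]; auto. exfalso.
        assert (is_upper_bound L y).
        { intros l [Hl Hls]. destruct (Rle_or_lt l y) as [|Hly]; auto.
          exfalso. pose proof (H3 a y l Ha Hy Hl (Rlt_le _ _ Hly)). lra. }
        pose proof (Hlst y H). lra.
      * intros Hzy. pose proof (H3 a z y Ha Hz Hy Hzy). lra.
    + right. intros y Hy; split.
      * intros Hsy. destruct (Rlt_or_le z y) as [|Hyz]; auto. exfalso.
        pose proof (H3 a y z Ha Hy Hz Hyz). lra.
      * intros Hzy. destruct (Rle_or_lt s (S a y)) as [|Hlt]; auto.
        exfalso. assert (L y) by (split; auto). pose proof (Hub y H). lra.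
  - exists 0; split; [unfold in01; lra|]. left. intros y Hy; split.
    + intros _; apply Hy.
    + intros _. destruct (Rle_or_lt s (S a y)) as [|Hlt]; auto.
      exfalso; apply Hemp; exists y; split; auto.
Qed.

Lemma union_iff z y : (exists n, z + / (INR n + 1) <= y) <-> z < y.
Proof.
  split.
  - intros [n Hn]. assert (0 < / (INR n + 1)).
    { apply Rinv_0_lt_compat. pose proof (pos_INR n). lra. }
    lra.
  - intros H. destruct (archimed_cor1 (y - z)) as [N [HN HN0]]; [lra|].
    exists N.
    assert (/ (INR N + 1) <= / INR N).
    { apply Rinv_le_contravar; [apply lt_0_INR; auto| lra]. }
    lra.
Qed.

Lemma borel_open_ray z : borel (fun y => z < y).
Proof.
  intros Sigma HSig Hr.
  replace (fun y => z < y) with (fun y => exists n, z + / (INR n + 1) <= y).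
  - apply (proj2 (proj2 HSig)). intros n; apply Hr.
  - apply pred_ext; intros y; apply union_iff.
Qed.

Lemma B_meas S a {X : Type} (A : (X -> Prop) -> Prop) (f : X -> R) :
  semicopula S -> in01 a -> (forall x, in01 (f x)) -> measurable_fun A f ->
  forall s, A (fun x => s <= S a (f x)).
Proof.
  intros HS Ha Hf Hm s.
  destruct (z_lemma S a HS Ha s) as [z [Hz [Hc|Hc]]].
  - replace (fun x => s <= S a (f x)) with (fun x => z <= f x).
    + apply Hm. intros Sigma _ Hr; apply Hr.
    + apply pred_ext; intros x. symmetry; apply Hc, Hf.
  - replace (fun x => s <= S a (f x)) with (fun x => z < f x).
    + apply Hm. apply borel_open_ray.
    + apply pred_ext; intros x. symmetry; apply Hc, Hf.
Qed.

Theorem theorem3 (S : R -> R -> R) :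
  semicopula S -> associative01 S ->
  (forall a, 0 < a < 1 ->
     strictly_increasing01 (S a) /\ left_continuous01 (S a) /\
     isolated_discontinuities01 (S a)) ->
  forall (X : Type) (A : (X -> Prop) -> Prop) (mu : (X -> Prop) -> R) (f : X -> R) (a : R),
    inhabited X -> sigma_algebra A -> capacity A mu -> continuous_from_below A mu ->
    (forall x, in01 (f x)) -> measurable_fun A f -> in01 a ->
    sugeno S mu (fun x => S a (f x)) = S a (sugeno S mu f).
Proof.
  intros HS Hassoc Hh X A mu f a _ HA Hcap Hcfb Hf Hm Ha.
  pose proof HS as [H1 [H2 [H3 H4]]].
  destruct Hcap as [C1 [C2 [C3 C4]]].
  assert (Aray : forall t, A (fun x => t <= f x)).
  { intros t; apply Hm; intros Sigma _ Hr; apply Hr. }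
  assert (Aor : forall z, A (fun x => z < f x)).
  { intros z; apply Hm; apply borel_open_ray. }
  assert (BM := B_meas S a A f HS Ha Hf Hm).
  set (m := fun t => mu (fun x => t <= f x)).
  assert (Hmi : forall t, in01 (m t)) by (intros; apply C1, Aray).
  set (E := fun v => exists t, in01 t /\ v = S t (mu (fun x => t <= f x))).
  set (EJ := fun v => exists t, in01 t /\ v = S t (mu (fun x => t <= S a (f x)))).
  assert (h0 : in01 0) by (unfold in01; lra).
  assert (HE : is_lub E (sugeno S mu f)).
  { apply Rsup_spec.
    - exists (S 0 (m 0)); exists 0; split; auto.
    - intros v [t [Ht ->]]. apply (H1 t _ Ht (Hmi t)). }
  assert (HEJ : is_lub EJ (sugeno S mu (fun x => S a (f x)))).
  { apply Rsup_spec.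
    - exists (S 0 (mu (fun x => 0 <= S a (f x)))); exists 0; split; auto.
    - intros v [t [Ht ->]]. apply (H1 t _ Ht (C1 _ (BM t))). }
  set (I := sugeno S mu f) in *.
  set (J := sugeno S mu (fun x => S a (f x))) in *.
  assert (HI : in01 I).
  { destruct HE as [Hu Hl]. split.
    - apply Rle_trans with (S 0 (m 0)); [apply (H1 0 _ h0 (Hmi 0))|].
      apply Hu; exists 0; split; auto.
    - apply Hl. intros v [t [Ht ->]]. apply (H1 t _ Ht (Hmi t)). }
  assert (HSaI : in01 (S a I)) by (apply H1; auto).
  apply Rle_antisym.
  -
    apply (proj2 HEJ). intros v [s [Hs ->]].
    destruct (z_lemma S a HS Ha s) as [z [Hz [Hc|Hc]]].
    + replace (fun x => s <= S a (f x)) with (fun x => z <= f x)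
        by (apply pred_ext; intros x; symmetry; apply Hc, Hf).
      fold (m z).
      assert (Hsz : s <= S a z) by (apply Hc; auto; lra).
      apply Rle_trans with (S (S a z) (m z)).
      { apply H2; auto. }
      rewrite Hassoc; auto.
      apply H3; [exact Ha| apply H1; auto | exact HI |].
      apply (proj1 HE). exists z; split; auto.
    + replace (fun x => s <= S a (f x)) with (fun x => z < f x)
        by (apply pred_ext; intros x; symmetry; apply Hc, Hf).
      set (Bn := fun (n : nat) x => z + / (INR n + 1) <= f x).
      assert (Hcv := Hcfb Bn (fun n => Aray _)).
      assert (Hun : (fun x => exists n, Bn n x) = (fun x => z < f x)).
      { apply pred_ext; intros x; apply union_iff. }
      rewrite Hun in Hcv.
      assert (Hpos : forall n, 0 < / (INR n + 1)).
      { intros n; apply Rinv_0_lt_compat. pose proof (pos_INR n). lra. }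
      assert (Hmono : forall n x, Bn n x -> Bn (Datatypes.S n) x).
      { intros n x. unfold Bn. rewrite S_INR.
        assert (/ (INR n + 1 + 1) <= / (INR n + 1)).
        { apply Rinv_le_contravar; [pose proof (pos_INR n); lra| lra]. }
        lra. }
      specialize (Hcv Hmono).
      set (p := mu (fun x => z < f x)) in *.
      assert (Hp : in01 p) by (apply C1, Aor).
      assert (Hn : forall n, S s (mu (Bn n)) <= S a I).
      { intros n. unfold Bn.
        destruct (Rle_or_lt (z + / (INR n + 1)) 1) as [Hle|Hgt].
        - set (y := z + / (INR n + 1)) in *.
          assert (Hy : in01 y) by (unfold y, in01 in *; specialize (Hpos n); lra).
          assert (Hsy : s <= S a y) by (apply Hc; auto; unfold y; specialize (Hpos n); lra).
          fold (m y).
          apply Rle_trans with (S (S a y) (m y)).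
          { apply H2; auto. }
          rewrite Hassoc; auto.
          apply H3; [exact Ha| apply H1; auto | exact HI |].
          apply (proj1 HE). exists y; split; auto.
        - replace (fun x => z + / (INR n + 1) <= f x) with (fun _ : X => False).
          + rewrite C2. rewrite (proj2 (S0 S HS s Hs)). apply HSaI.
          + apply pred_ext; intros x; split; [tauto|]. intros. specialize (Hf x).
            unfold in01 in Hf; lra. }
      destruct (Rle_or_lt (S s p) (S a I)) as [|Hlt]; auto.
      exfalso.
      pose proof (lc_all S HS Hh s Hs) as LC; unfold left_continuous01 in LC.
      destruct (LC p Hp (S s p - S a I)) as [d [Hd Hdd]]; [lra|].
      destruct (Hcv d Hd) as [N HN].
      specialize (HN N (le_n N)). unfold R_dist in HN.
      assert (Hle : mu (Bn N) <= p).
      { apply C4; [apply Aray|apply Aor|]. intros x Hx. unfold Bn in Hx. specialize (Hpos N); lra. }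
      assert (Hin : in01 (mu (Bn N))) by (apply C1, Aray).
      specialize (Hdd (mu (Bn N)) Hin Hle).
      assert (p - mu (Bn N) < d).
      { rewrite Rabs_minus_sym in HN. apply Rle_lt_trans with (2 := HN). apply Rle_abs. }
      specialize (Hdd H). specialize (Hn N).
      unfold Rabs in Hdd; destruct Rcase_abs in Hdd; lra.
  -
    destruct (Rle_or_lt (S a I) J) as [|Hlt]; auto. exfalso.
    pose proof (lc_all S HS Hh a Ha) as LC; unfold left_continuous01 in LC.
    destruct (LC I HI (S a I - J)) as [d [Hd Hdd]]; [lra|].
    destruct (classic (exists v, E v /\ I - d < v)) as [[v [[t [Ht Hv]] Hvd]]|Hn].
    + assert (Hvi : in01 v) by (rewrite Hv; apply H1; auto).
      assert (HvI : v <= I) by (apply (proj1 HE); exists t; auto).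
      specialize (Hdd v Hvi HvI ltac:(lra)).
      assert (Hgv : S a v <= J).
      { rewrite Hv. fold (m t). rewrite <- Hassoc; auto.
        apply Rle_trans with (S (S a t) (mu (fun x => S a t <= S a (f x)))).
        - apply H3; [apply H1; auto | apply Hmi | apply C1, BM |].
          apply C4; [apply Aray | apply BM |]. intros x Hx. apply H3; auto.
        - apply (proj1 HEJ). exists (S a t); split; [apply H1; auto | reflexivity]. }
      unfold Rabs in Hdd; destruct Rcase_abs in Hdd; lra.
    + assert (is_upper_bound E (I - d)).
      { intros v Hv. apply Rnot_lt_le. intro; apply Hn; eauto. }
      pose proof (proj2 HE _ H). lra.
Qed.
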